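(* Let $k_2=\frac{1}{8\cdot3^{2/3}}$. Then for every integer $\nu\ge1$, $c_\nu\ge\frac14+k_2\nu^{-2/3}$.
   Context: A weighted digraph $D=(V,A,w)$ is a digraph without loops or parallel arcs (opposite arcs allowed) with weights $w:A\to\mathbb{R}_{\ge0}$; $w(D)$ is the total arc weight. For a partition $(X,Y)$ of $V$, $w(X,Y)$ is the total weight of arcs from $X$ to $Y$, and $\mathrm{mac}(D)=\max_{(X,Y)}w(X,Y)$. For an integer $\nu\ge1$, $c_\nu$ is the supremum of reals $c\ge0$ such that every acyclic weighted digraph $D$ whose longest directed path has exactly $\nu$ vertices satisfies $\mathrm{mac}(D)\ge c\cdot w(D)$. *)

(* Defs.v *)
From HB Require Import structures.
From mathcomp Require Import all_boot all_order all_algebra.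
From mathcomp Require Import all_classical all_reals all_analysis.
Set Implicit Arguments. Unset Strict Implicit. Unset Printing Implicit Defensive.
Import Order.TTheory GRing.Theory Num.Theory.
Local Open Scope ring_scope.
Local Open Scope classical_set_scope.

(* A weighted digraph on a finite vertex type V: arc relation A (no loops,
   no parallel arcs since A is a relation; opposite arcs allowed) and a
   nonnegative weight w x y on each arc (x,y). Values of w off arcs are
   irrelevant. *)
Definition weighted_digraph (R : realType) (V : finType) (A : rel V)
  (w : V -> V -> R) : Prop :=
  (forall x, ~~ A x x) /\ (forall x y, A x y -> 0 <= w x y).

Definition total_weight (R : realType) (V : finType) (A : rel V)
  (w : V -> V -> R) : R :=
  \sum_(x : V) \sum_(y : V | A x y) w x y.

Definition cut_weight (R : realType) (V : finType) (A : rel V)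
  (w : V -> V -> R) (X : {set V}) : R :=
  \sum_(x in X) \sum_(y in ~: X | A x y) w x y.

Definition mac (R : realType) (V : finType) (A : rel V)
  (w : V -> V -> R) : R :=
  \big[Num.max/0]_(X : {set V}) cut_weight A w X.

Definition dipath (V : finType) (A : rel V) (x : V) (p : seq V) : bool :=
  path A x p && uniq (x :: p).

Definition acyclic (V : finType) (A : rel V) : Prop :=
  forall x y, A x y -> ~~ connect A y x.

Definition longest_path_vertices (V : finType) (A : rel V) (nu : nat) : Prop :=
  (exists x p, dipath A x p /\ size (x :: p) = nu) /\
  (forall x p, dipath A x p -> (size (x :: p) <= nu)%N).

(* c_nu as a supremum (in the extended reals, so that the supremum of an
   unbounded set is +oo) *)
Definition c_nu (R : realType) (nu : nat) : \bar R :=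
  ereal_sup [set (c%:E)%E | c in
    [set c : R | 0 <= c /\
      forall (V : finType) (A : rel V) (w : V -> V -> R),
        weighted_digraph A w -> acyclic A -> longest_path_vertices A nu ->
        c * total_weight A w <= mac A w]].

Definition k2 (R : realType) : R := 1 / (8 * (3 `^ (2 / 3))).

(* Main.v *)
Require Import Defs.
From HB Require Import structures.
From mathcomp Require Import all_boot all_order all_algebra.
From mathcomp Require Import all_classical all_reals all_analysis.
From mathcomp Require Import zify ring lra.
Import Order.TTheory GRing.Theory Num.Theory.
Local Open Scope ring_scope.

Lemma path_connect_last (V : finType) (A : rel V) x0 p y :
  path A x0 p -> y \in x0 :: p -> connect A y (last x0 p).
Proof.
move=> hp hy; case/splitPl: hy hp => p1 p2 hl hp.
move: hp; rewrite cat_path last_cat => /andP[_ hp2].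
by apply/connectP; exists p2; rewrite -hl.
Qed.

Lemma level_exists (V : finType) (A : rel V) (nu : nat) :
  acyclic A -> longest_path_vertices A nu ->
  exists l : V -> nat, (forall v, (l v < nu)%N) /\
     (forall x y, A x y -> (l x < l y)%N).
Proof.
move=> hac [_ hlong].
pose P (v : V) (n : nat) := exists x p, dipath A x p /\ last x p = v /\ size p = n.
have P0 v : P v 0%N by exists v, [::]; split => //; rewrite /dipath /= .
have Pb v n : P v n -> (n < nu)%N.
  by move=> [x [p [hd [_ <-]]]]; have := hlong x p hd.
pose l v := \max_(n < nu | `[< P v n >]) (n : nat).
have lge v n : P v n -> (n <= l v)%N.
  move=> h; have hn := Pb _ _ h.
  by apply: (leq_bigmax_cond (Ordinal hn)); apply/asboolP.
have lP v : P v (l v).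
  have hc : (0 < #|[pred n : 'I_nu | `[< P v n >]]|)%N.
    apply/card_gt0P; exists (Ordinal (Pb _ _ (P0 v))).
    by rewrite inE; exact: (P0 v).
  have -> : l v = \max_(i in [pred n : 'I_nu | `[< P v n >]]) (i : nat).
    by apply: eq_bigl.
  have [i0 hi0 ->] := eq_bigmax_cond (fun n : 'I_nu => (n : nat)) hc.
  by move: hi0; rewrite inE.
exists l; split.
  by move=> v; exact: Pb _ _ (lP v).
move=> x y hxy; apply: lge.
have [x0 [p [/andP [hp hu] [hl hs]]]] := lP x.
exists x0, (rcons p y); split; last by rewrite last_rcons size_rcons hs.
rewrite /dipath -rcons_cons rcons_uniq hu rcons_path hp hl hxy !andbT /=.
apply/negP => hy.
have := path_connect_last _ _ _ _ _ hp hy; rewrite hl => hc.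
by have := hac _ _ hxy; rewrite hc.
Qed.


Lemma cut_weightE (R : realType) (V : finType) (A : rel V) (w : V -> V -> R) X :
  cut_weight A w X =
  \sum_x \sum_(y | A x y) ((x \in X) && (y \notin X))%:R * w x y.
Proof.
rewrite /cut_weight big_mkcond /=; apply: eq_bigr => x _.
case: (x \in X); last by rewrite big1 // => y _; rewrite mul0r.
rewrite [RHS]big_mkcond [LHS]big_mkcond /=; apply: eq_bigr => y _.
rewrite inE; case: (y \in X) => /=; case: (A x y) => //=.
  by rewrite mul0r.
by rewrite mul1r.
Qed.

Lemma mac_ge (R : realType) (V : finType) (A : rel V) (w : V -> V -> R) X :
  cut_weight A w X <= mac A w.
Proof. exact: (le_bigmax _ (fun X => cut_weight A w X)). Qed.

Lemma avg_bound (R : realType) (V : finType) (A : rel V) (w : V -> V -> R)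
  (O : finType) (lam : O -> R) (X : O -> {set V}) (c : R) :
  weighted_digraph A w -> (forall o, 0 <= lam o) -> \sum_o lam o = 1 ->
  (forall x y, A x y -> c <= \sum_o lam o * ((x \in X o) && (y \notin X o))%:R) ->
  c * total_weight A w <= mac A w.
Proof.
move=> [_ hw] hl0 hl1 hc.
apply: (@le_trans _ _ (\sum_o lam o * cut_weight A w (X o))).
  have -> : \sum_o lam o * cut_weight A w (X o) =
    \sum_x \sum_(y | A x y)
       (\sum_o lam o * ((x \in X o) && (y \notin X o))%:R) * w x y.
    under eq_bigr => o _ do rewrite cut_weightE mulr_sumr.
    rewrite exchange_big /=; apply: eq_bigr => x _.
    under eq_bigr => o _ do rewrite mulr_sumr.
    rewrite exchange_big /=; apply: eq_bigr => y _.
    by rewrite mulr_suml; apply: eq_bigr => o _; rewrite mulrA.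
  rewrite /total_weight mulr_sumr; apply: ler_sum => x _.
  rewrite mulr_sumr; apply: ler_sum => y hxy.
  by apply: ler_wpM2r; [exact: hw | exact: hc].
apply: (@le_trans _ _ (\sum_o lam o * mac A w)).
  by apply: ler_sum => o _; apply: ler_wpM2l => //; apply: mac_ge.
by rewrite -mulr_suml hl1 mul1r.
Qed.


Lemma count_gen (T : finType) (r : T) (Z : {set T}) k : r \notin Z ->
  #|[set S : {set T} | (#|S| == k.+1) && (r \in S) && (S :&: Z == finset.set0)]|
  = 'C(#|~: (r |: Z)|, k).
Proof.
move=> hrZ.
rewrite -cards_draws.
have -> : [set S : {set T} | (#|S| == k.+1) && (r \in S) && (S :&: Z == finset.set0)] =
   (fun S' => r |: S') @: [set S' : {set T} | S' \subset ~: (r |: Z) & #|S'| == k].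
  apply/setP => S; rewrite inE; apply/idP/imsetP.
    move=> /andP[/andP[hc hr] hz]; exists (S :\ r); last by rewrite finset.setD1K.
    rewrite inE; apply/andP; split.
      apply/fintype.subsetP => x; rewrite !inE => /andP[hxr hxS].
      rewrite negb_or hxr /=; apply/negP => hxZ.
      by move: hz => /eqP/setP/(_ x); rewrite !inE hxS hxZ.
    by move: hc; rewrite (cardsD1 r S) hr add1n eqSS.
  move=> [S' hS' ->]; move: hS'; rewrite inE => /andP[hsub hc].
  have hrS' : r \notin S'.
    by apply/negP => /(fintype.subsetP hsub); rewrite !inE eqxx.
  rewrite cardsU1 hrS' (eqP hc) add1n eqxx finset.setU11 /=.
  apply/eqP/setP => x; rewrite !inE.
  case: (eqVneq x r) => [->|hxr] /=; first by rewrite (negbTE hrZ).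
  case hx: (x \in S') => //=.
  by move: (fintype.subsetP hsub x hx); rewrite !inE negb_or => /andP[_ /negbTE].
rewrite card_in_imset // => S1 S2; rewrite !inE => /andP[h1 _] /andP[h2 _] he.
have n1 : r \notin S1 by apply/negP => /(fintype.subsetP h1); rewrite !inE eqxx.
have n2 : r \notin S2 by apply/negP => /(fintype.subsetP h2); rewrite !inE eqxx.
by rewrite -(finset.setU1K n1) he finset.setU1K.
Qed.

Lemma count_in (D k : nat) (r : 'I_D) :
  #|[set S : {set 'I_D} | (#|S| == k.+1) && (r \in S)]| = 'C(D.-1, k).
Proof.
have -> : D.-1 = #|~: (r |: finset.set0)|.
  by rewrite finset.setU0 cardsC1 card_ord.
rewrite -(count_gen _ r finset.set0 k) ?inE //.
by apply: eq_card => S; rewrite !inE finset.setI0 eqxx andbT.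
Qed.

Lemma count_inout (D k : nat) (r r' : 'I_D) : r != r' ->
  #|[set S : {set 'I_D} | (#|S| == k.+1) && (r \in S) && (r' \notin S)]|
  = 'C(D.-2, k).
Proof.
move=> hrr.
have -> : D.-2 = #|~: (r |: [set r'])|.
  have h := cardsC [set r; r']; rewrite cards2 hrr card_ord in h.
  by rewrite -[X in X.-2 = _]h add2n.
rewrite -(count_gen _ r [set r'] k) ?inE //.
apply: eq_card => S; rewrite !inE.
congr (_ && _); apply/idP/idP.
  move=> h; apply/eqP/setP => x; rewrite !inE.
  by case: (eqVneq x r') => [->|]; rewrite ?(negbTE h) ?andbF.
move=> /eqP/setP/(_ r'); rewrite !inE eqxx andbT => ->; done.
Qed.


Lemma sum_card (R : realType) (T : finType) (P : pred T) :
  \sum_(S : T) ((P S)%:R : R) = (#|[set S | P S]|)%:R.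
Proof.
rewrite -sum1_card natr_sum [RHS]big_mkcond /=; apply: eq_bigr => S _.
by rewrite inE; case: (P S).
Qed.

Definition wb (R : realType) (D k : nat) (S : {set 'I_D}) : R :=
  (#|S| == k)%:R / ('C(D, k))%:R.

Lemma wb_ge0 (R : realType) D k S : 0 <= wb R D k S.
Proof. by rewrite /wb divr_ge0 ?ler0n. Qed.

Lemma wb_sum (R : realType) D k : (k <= D)%N -> \sum_S wb R D k S = 1.
Proof.
move=> hk; rewrite /wb -mulr_suml sum_card.
have -> : [set S : {set 'I_D} | #|S| == k] = [set S : {set 'I_D} | #|S| == k] by [].
rewrite card_draws card_ord divff // pnatr_eq0 -lt0n bin_gt0 //.
Qed.

Lemma wb_in (R : realType) D k (r : 'I_D) : (k <= D)%N ->
  \sum_S wb R D k S * (r \in S)%:R = k%:R / D%:R.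
Proof.
move=> hkD.
have hD : (0 < D)%N by case: r => [m hm]; apply: leq_ltn_trans hm.
rewrite /wb.
under eq_bigr => S _ do rewrite mulrAC -natrM mulnb.
rewrite -mulr_suml sum_card.
case: k hkD => [|k] hkD.
  rewrite mul0r (_ : [set _ | _] = finset.set0) ?cards0 ?mul0r //.
  apply/setP => S; rewrite !inE cards_eq0.
  by case: (eqVneq S finset.set0) => [->|]; rewrite ?inE.
rewrite count_in.
apply/eqP; rewrite eqr_div ?pnatr_eq0 -?lt0n ?bin_gt0 //.
by rewrite -!natrM mulnC mul_bin_diag.
Qed.

Lemma wb_out (R : realType) D k (r : 'I_D) : (k <= D)%N ->
  \sum_S wb R D k S * (r \notin S)%:R = 1 - k%:R / D%:R.
Proof.
move=> hk; rewrite -(wb_in R D k r hk) -[X in X - _](wb_sum R D k hk) -sumrB; apply: eq_bigr => S _.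
by case: (r \in S); rewrite /= ?mulr0 ?mulr1 ?subr0 ?subrr.
Qed.

Lemma wb_inout (R : realType) D k (r r' : 'I_D) : r != r' ->
  \sum_S wb R D k S * ((r \in S) && (r' \notin S))%:R
  = (k * (D - k))%:R / (D * D.-1)%:R.
Proof.
move=> hrr.
have hD : (1 < D)%N.
  case: r r' hrr => [a ha] [b hb]; rewrite -val_eqE /= => hab.
  case: (ltngtP a b) hab => // h _.
    by apply: leq_ltn_trans hb; apply: leq_ltn_trans h.
  by apply: leq_ltn_trans ha; apply: leq_ltn_trans h.
rewrite /wb.
under eq_bigr => S _ do rewrite mulrAC -natrM mulnb andbA.
rewrite -mulr_suml sum_card.
case: k => [|k].
  rewrite mul0n mul0r (_ : [set _ | _] = finset.set0) ?cards0 ?mul0r //.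
  apply/setP => S; rewrite !inE cards_eq0.
  by case: (eqVneq S finset.set0) => [->|]; rewrite ?inE.
rewrite count_inout //.
have [hk|hk] := leqP k.+1 D; last first.
  rewrite bin_small ?mul0r; last first.
    by move: hk hD; clear; lia.
  by rewrite (_ : (D - k.+1 = 0)%N) ?muln0 ?mul0r //; apply/eqP; rewrite subn_eq0 ltnW.
apply/eqP; rewrite eqr_div ?pnatr_eq0 -?lt0n ?bin_gt0 ?muln_gt0 //; last first.
  by rewrite (ltn_trans _ hD) //= -ltnS prednK // (ltn_trans _ hD).
rewrite -!natrM; apply/eqP; congr (_%:R).
have h1 := mul_bin_diag D.-1 k.
have h2 := mul_bin_down D k.+1.
rewrite mulnC -mulnA h1 mulnA [(D * k.+1)%N]mulnC -mulnA h2.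
by rewrite mulnA.
Qed.


Section Design.
Variables (R : realType) (B D : nat) (kk : 'I_B -> nat).

Definition lam (o : {ffun 'I_B -> {set 'I_D}}) : R :=
  \prod_b wb R D (kk b) (o b).

Lemma lam_ge0 o : 0 <= lam o.
Proof. by apply: prodr_ge0 => b _; apply: wb_ge0. Qed.

Lemma lam_sum : (forall b, kk b <= D)%N -> \sum_o lam o = 1.
Proof.
move=> hk; rewrite /lam -(bigA_distr_bigA (fun b S => wb R D (kk b) S)).
by rewrite big1 // => b _; apply: wb_sum.
Qed.

Definition hh (bi bj : 'I_B) (ri rj : 'I_D) (b : 'I_B) (S : {set 'I_D}) : R :=
  (if b == bi then (ri \in S)%:R else 1) * (if b == bj then (rj \notin S)%:R else 1).

Lemma cov_prod bi bj ri rj :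
  \sum_o lam o * ((ri \in o bi) && (rj \notin o bj))%:R =
  \prod_b \sum_S wb R D (kk b) S * hh bi bj ri rj b S.
Proof.
rewrite (bigA_distr_bigA (fun b S => wb R D (kk b) S * hh bi bj ri rj b S)) /=.
apply: eq_bigr => o _; rewrite [RHS]big_split /=; congr (_ * _).
rewrite /hh big_split /= -!big_mkcond /= !big_pred1_eq.
by rewrite -natrM mulnb.
Qed.

Lemma cov_same b ri rj : (forall b, kk b <= D)%N -> ri != rj ->
  \sum_o lam o * ((ri \in o b) && (rj \notin o b))%:R =
  (kk b * (D - kk b))%:R / (D * D.-1)%:R.
Proof.
move=> hk hr; rewrite cov_prod (bigD1 b) //= [X in _ * X = _]big1 ?mulr1.
  rewrite /hh eqxx.
  under eq_bigr => S _ do rewrite -natrM mulnb.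
  exact: wb_inout.
move=> b' hb'; rewrite /hh (negbTE hb').
under eq_bigr => S _ do rewrite mulr1 mulr1.
exact: wb_sum.
Qed.

Lemma cov_diff bi bj ri rj : (forall b, kk b <= D)%N -> bi != bj ->
  \sum_o lam o * ((ri \in o bi) && (rj \notin o bj))%:R =
  (kk bi)%:R / D%:R * (1 - (kk bj)%:R / D%:R).
Proof.
move=> hk hb; rewrite cov_prod (bigD1 bi) //= (bigD1 bj) 1?eq_sym //= [X in _ * (_ * X) = _]big1 ?mulr1.
  congr (_ * _).
    rewrite /hh eqxx (negbTE hb).
    under eq_bigr => S _ do rewrite mulr1.
    exact: wb_in.
  rewrite /hh eqxx eq_sym (negbTE hb).
  under eq_bigr => S _ do rewrite mul1r.
  exact: wb_out.
move=> b' /andP[hb1 hb2]; rewrite /hh (negbTE hb1) (negbTE hb2).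
under eq_bigr => S _ do rewrite mulr1 mulr1.
exact: wb_sum.
Qed.

End Design.


Lemma ineq_same (R : realType) (D K s : R) : 2 <= D -> (2 * K - D) ^+ 2 <= s ^+ 2 ->
  1 / 4 + (D - s ^+ 2) / (4 * D * (D - 1)) <= K * (D - K) / (D * (D - 1)).
Proof.
move=> hD hK; rewrite -subr_ge0.
have hD0 : D != 0 by apply/eqP => h; rewrite h in hD; lra.
have hD1 : D - 1 != 0 by apply/eqP => h; lra.
have -> : K * (D - K) / (D * (D - 1)) - (1 / 4 + (D - s ^+ 2) / (4 * D * (D - 1)))
   = (s ^+ 2 - (2 * K - D) ^+ 2) / (4 * D * (D - 1)).
  by field; rewrite hD0 hD1.
apply: divr_ge0; first by lra.
apply: mulr_ge0; [apply: mulr_ge0|]; lra.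
Qed.

Lemma ineq_cross (R : realType) (D K1 K2 s : R) : 2 <= D ->
  (2 * K1 - D) ^+ 2 <= s ^+ 2 -> (2 * K2 - D) ^+ 2 <= s ^+ 2 -> K2 + 1 <= K1 ->
  1 / 4 + (D - s ^+ 2) / (4 * D * (D - 1)) <= K1 / D * (1 - K2 / D).
Proof.
move=> hD h1 h2 hK; rewrite -subr_ge0.
have hD0 : D != 0 by apply/eqP => h; rewrite h in hD; lra.
have hD1 : D - 1 != 0 by apply/eqP => h; lra.
have -> : K1 / D * (1 - K2 / D) - (1 / 4 + (D - s ^+ 2) / (4 * D * (D - 1)))
   = (4 * (D - 1) * K1 * (D - K2) - D ^+ 3 + D * s ^+ 2) / (4 * D ^+ 2 * (D - 1))
   by field; rewrite hD0 hD1.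
apply: divr_ge0; last first.
  apply: mulr_ge0; [apply: mulr_ge0|]; try lra; exact: sqr_ge0.
have uv : 4 * ((K1 - D / 2) * (K2 - D / 2)) <= s ^+ 2 by nra.
have e : 4 * K1 * (D - K2) = D ^+ 2 + 2 * D * ((K1 - D/2) - (K2 - D/2))
          - 4 * ((K1 - D / 2) * (K2 - D / 2)) by field.
have h3 : D ^+ 2 + 2 * D - s ^+ 2 <= 4 * K1 * (D - K2) by rewrite e; nra.
have h4 : (D - 1) * (D ^+ 2 + 2 * D - s ^+ 2) <= (D - 1) * (4 * K1 * (D - K2)).
  by apply: ler_wpM2l; lra.
have h5 : 0 <= (D - 1) ^+ 2 + s ^+ 2 - 1 by nra.
nra.
Qed.


Lemma kk_sq (R : realType) (s D c0 b : nat) : (s <= D)%N -> (b <= s)%N -> (c0 * 2 = D + s)%N ->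
  (2 * ((c0 - b)%N)%:R - D%:R) ^+ 2 <= (s%:R : R) ^+ 2.
Proof.
move=> hsD hb hc.
have hbc : (b <= c0)%N by lia.
have e : 2 * (c0%:R : R) = D%:R + s%:R.
  by rewrite -natrD -hc natrM mulrC.
have hb' : (b%:R : R) <= s%:R by rewrite ler_nat.
have hb0 : 0 <= (b%:R : R) by [].
rewrite natrB //.
have -> : 2 * (c0%:R - b%:R) - D%:R = (s%:R - 2 * b%:R : R) by lra.
nra.
Qed.

Lemma same_final (R : realType) (K d s : nat) : (K <= d.+2)%N ->
  (2 * (K%:R : R) - (d.+2)%:R) ^+ 2 <= (s%:R) ^+ 2 ->
  (1 / 4 : R) + ((d.+2)%:R - (s%:R) ^+ 2) / (4 * (d.+2)%:R * ((d.+2)%:R - 1)) <=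
  (K * (d.+2 - K))%:R / (d.+2 * (d.+2).-1)%:R.
Proof.
move=> hK hs.
have hD2 : 2 <= ((d.+2)%:R : R) by rewrite ler_nat.
have hD1 : ((d.+2)%:R : R) - 1 = (d.+1)%:R by rewrite -addn1 natrD addrK.
rewrite natrM natrB // natrM /= -hD1.
exact: ineq_same.
Qed.

Lemma design_levels (R : realType) (s d c0 : nat) :
  (s <= d.+2)%N -> (c0 * 2 = d.+2 + s)%N ->
  forall i j, (i < j)%N -> (j < s.+1 * d.+2)%N ->
  1 / 4 + ((d.+2)%:R - (s%:R) ^+ 2) / (4 * (d.+2)%:R * ((d.+2)%:R - 1)) <=
  \sum_o lam R s.+1 d.+2 (fun b : 'I_(s.+1) => (c0 - b)%N) o *
     (((inord (i %% d.+2) : 'I_(d.+2)) \in o (inord (i %/ d.+2)))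
      && ((inord (j %% d.+2) : 'I_(d.+2)) \notin o (inord (j %/ d.+2))))%:R.
Proof.
move=> hsD hc i j hij hj.
have hk (b : 'I_(s.+1)) : (c0 - b <= d.+2)%N by lia.
have hbj : (j %/ d.+2 < s.+1)%N by rewrite ltn_divLR.
have hbi : (i %/ d.+2 < s.+1)%N by rewrite ltn_divLR // (ltn_trans hij).
have hle : (i %/ d.+2 <= j %/ d.+2)%N by apply: leq_div2r; apply: ltnW.
have vi : ((inord (i %/ d.+2) : 'I_(s.+1)) : nat) = (i %/ d.+2)%N by rewrite inordK.
have vj : ((inord (j %/ d.+2) : 'I_(s.+1)) : nat) = (j %/ d.+2)%N by rewrite inordK.
have wi : ((inord (i %% d.+2) : 'I_(d.+2)) : nat) = (i %% d.+2)%N by rewrite inordK // ltn_pmod.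
have wj : ((inord (j %% d.+2) : 'I_(d.+2)) : nat) = (j %% d.+2)%N by rewrite inordK // ltn_pmod.
have hD2 : 2 <= ((d.+2)%:R : R) by rewrite ler_nat.
have hD1 : ((d.+2)%:R : R) - 1 = (d.+1)%:R by rewrite -addn1 natrD addrK.
case: (eqVneq (inord (i %/ d.+2) : 'I_(s.+1)) (inord (j %/ d.+2))) => hb.
  rewrite hb cov_same //; last first.
    rewrite -val_eqE /= wi wj; apply/eqP => hr.
    have := divn_eq i d.+2; have := divn_eq j d.+2.
    have hq : (i %/ d.+2 = j %/ d.+2)%N by rewrite -vi -vj hb.
    rewrite hq hr => <- hi; lia.
  apply: same_final; first exact: hk.
  apply: kk_sq => //; rewrite -ltnS; exact: ltn_ord.
rewrite cov_diff //.
have hlt : (i %/ d.+2 < j %/ d.+2)%N.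
  rewrite ltn_neqAle hle andbT; apply/eqP => h; move: hb.
  by rewrite -val_eqE /= vi vj h eqxx.
apply: ineq_cross => //.
- by apply: kk_sq; [exact: hsD | rewrite -ltnS; exact: ltn_ord | exact: hc].
- by apply: kk_sq; [exact: hsD | rewrite -ltnS; exact: ltn_ord | exact: hc].
- rewrite !natrB ?vi ?vj; try lia.
  have h : (((i %/ d.+2).+1)%:R : R) <= (j %/ d.+2)%N%:R by rewrite ler_nat.
  rewrite -addn1 natrD in h; lra.
Qed.


Lemma powR_cube (R : realType) (x r : R) : 0 <= x -> (x `^ r) ^+ 3 = x `^ (r * 3).
Proof.
move=> hx; rewrite -powR_mulrn ?powR_ge0 // powRrM //.
Qed.

Lemma t_cube (R : realType) (nu : nat) : (0 < nu)%N ->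
  (k2 R * nu%:R `^ (- (2 / 3))) ^+ 3 = 1 / (4608 * (nu%:R) ^+ 2).
Proof.
move=> hnu.
have hn : 0 < (nu%:R : R) by rewrite ltr0n.
rewrite exprMn /k2 powR_cube ?ler0n //.
have -> : - (2 / 3) * 3 = - (2%:R : R) by field.
rewrite powRN powR_mulrn ?ler0n //.
have h3 : (1 / (8 * 3 `^ (2 / 3)) : R) ^+ 3 = 1 / (8 ^+ 3 * (3 `^ (2 / 3)) ^+ 3).
  by rewrite expr_div_n expr1n exprMn.
rewrite h3 powR_cube //.
have -> : (2 / 3 * 3 : R) = 2%:R by field.
rewrite powR_mulrn //.
have hn2 : (nu%:R : R) ^+ 2 != 0 by rewrite expf_neq0 // gt_eqF.
by field; rewrite gt_eqF.
Qed.

Lemma t_le (R : realType) (nu N Q : nat) : (0 < nu)%N -> (0 < Q)%N ->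
  (Q ^ 3 <= 4608 * nu ^ 2 * N ^ 3)%N ->
  k2 R * nu%:R `^ (- (2 / 3)) <= N%:R / Q%:R.
Proof.
move=> hnu hQ hk.
have t0 : 0 <= k2 R * nu%:R `^ (- (2 / 3)).
  by rewrite mulr_ge0 ?powR_ge0 // /k2 divr_ge0 // mulr_ge0 ?powR_ge0.
rewrite -(ler_pXn2r (_ : (0 < 3)%N)) ?nnegrE ?divr_ge0 ?ler0n //.
rewrite t_cube // expr_div_n -subr_ge0.
have hn : (nu%:R : R) != 0 by rewrite pnatr_eq0 -lt0n.
have hq : (Q%:R : R) != 0 by rewrite pnatr_eq0 -lt0n.
have -> : (N%:R : R) ^+ 3 / Q%:R ^+ 3 - 1 / (4608 * nu%:R ^+ 2) =
   (4608 * nu%:R ^+ 2 * N%:R ^+ 3 - Q%:R ^+ 3) / (4608 * nu%:R ^+ 2 * Q%:R ^+ 3).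
  by field; rewrite hn hq.
apply: divr_ge0; last by rewrite !mulr_ge0 ?exprn_ge0 ?ler0n.
rewrite subr_ge0.
have := hk; rewrite -(ler_nat R) !natrM.
by rewrite !exprS !expr0 !mulr1.
Qed.


Lemma params_small nu : (0 < nu)%N -> (nu <= 72)%N ->
  exists s d c0, [/\ (s <= d.+2)%N, (c0 * 2 = d.+2 + s)%N, (nu <= s.+1 * d.+2)%N,
     (s ^ 2 < d.+2)%N & ((4 * d.+2 * d.+1) ^ 3 <= 4608 * nu ^ 2 * (d.+2 - s ^ 2) ^ 3)%N].
Proof.
move=> h0 h72.
have hn := odd_double_half nu.
set o := (odd nu : nat) in hn *; set h := nu./2 in hn *.
have ho : (o <= 1)%N by rewrite /o; case: (odd nu).
rewrite -muln2 in hn.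
have hc : (1 <= o + h)%N by lia.
exists 0%N, ((o + h) * 2 - 2)%N, (o + h)%N.
have eD : ((((o + h) * 2 - 2).+2) = (o + h) * 2)%N by lia.
rewrite eD; split; [lia|lia|lia|lia|].
have e1 : (((o + h) * 2 - 2).+1 <= nu)%N by lia.
have e2 : (((o + h) * 2 - 2).+1 ^ 3 <= 72 * nu ^ 2)%N.
  apply: (leq_trans (n := nu ^ 3)); first by rewrite leq_exp2r.
  by rewrite (expnS nu 2) leq_mul2r h72 orbT.
rewrite (_ : 0 ^ 2 = 0)%N // subn0.
set X := ((o + h) * 2)%N in e2 *; set Y := (((o + h) * 2 - 2).+1) in e2 *.
rewrite !expnMn.
set X3 := (X ^ 3)%N; set Y3 := (Y ^ 3)%N; set Z := (nu ^ 2)%N in e2 *.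
have -> : (4 ^ 3 = 64)%N by [].
nia.
Qed.

Lemma params_big nu : (72 < nu)%N ->
  exists s d c0, [/\ (s <= d.+2)%N, (c0 * 2 = d.+2 + s)%N, (nu <= s.+1 * d.+2)%N,
     (s ^ 2 < d.+2)%N & ((4 * d.+2 * d.+1) ^ 3 <= 4608 * nu ^ 2 * (d.+2 - s ^ 2) ^ 3)%N].
Proof.
move=> h72.
have ex : exists m, (nu <= m * m.+1 * (4 * m + 1))%N.
  exists nu; rewrite -[X in (X <= _)%N]muln1 -mulnA leq_mul2l.
  by rewrite muln_gt0 addn1 orbT.
case: (ex_minnP ex) => m hm hmin.
have m3 : (3 <= m)%N.
  case: m hm hmin => [|[|[|m]]] hm _ //=; move: hm; rewrite /=; lia.
have hlow : (m.-1 * m * (4 * m.-1 + 1) < nu)%N.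
  rewrite ltnNge; apply/negP => h.
  have := hmin m.-1; rewrite prednK ?(leq_trans _ m3) //.
  move=> /(_ h); lia.
have hnu : (2 * m ^ 3 <= nu)%N.
  apply: leq_trans (ltnW hlow).
  have -> : (m.-1 * m * (4 * m.-1 + 1) = m * ((m - 1) * (4 * m - 3)))%N.
    by rewrite -subn1; clear -m3; nia.
  rewrite (expnS m 2) mulnCA leq_mul2l; apply/orP; right.
  clear -m3; nia.
exists m, (4 * m ^ 2 + m - 2)%N, (2 * m ^ 2 + m)%N.
have eD : ((4 * m ^ 2 + m - 2).+2 = 4 * m ^ 2 + m)%N by clear -m3; nia.
rewrite eD; split.
- by clear -m3; nia.
- by clear -m3; nia.
- by move: hm; clear; nia.
- by clear -m3; nia.
have eD1 : ((4 * m ^ 2 + m - 2).+1 <= 4 * m ^ 2 + m)%N by clear -m3; nia.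
set A := (4 * m ^ 2 + m)%N in eD1 *.
set Y := (m ^ 2)%N in A eD1 *.
have hA : (3 * A <= 13 * Y)%N by rewrite /A /Y; clear -m3; nia.
have hB : (3 * Y <= A - Y)%N by rewrite /A /Y; clear -m3; nia.
have hN : (4 * Y ^ 3 <= nu ^ 2)%N.
  have e : (4 * Y ^ 3 = (2 * m ^ 3) ^ 2)%N by rewrite /Y expnMn -!expnM.
  by rewrite e leq_exp2r.
apply: (leq_trans (n := (4 * A * A) ^ 3)).
  by rewrite leq_exp2r // leq_mul2l eD1 orbT.
apply: (leq_trans (n := 4608 * (4 * Y ^ 3) * (3 * Y) ^ 3)); last first.
  by apply: leq_mul; [apply: leq_mul | rewrite leq_exp2r].
have h3 : (27 * A ^ 3 <= 2197 * Y ^ 3)%N.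
  have := hA; rewrite -(leq_exp2r _ _ (_ : 0 < 3)%N) // !expnMn.
  by [].
rewrite !expnMn.
set P := (A ^ 3)%N in h3 *; set Q := (Y ^ 3)%N in h3 *.
clear -h3; nia.
Qed.


Theorem mainTheorem15 (R : realType) (nu : nat) (hnu : (1 <= nu)%N) :
  (((1 / 4 + k2 R * (nu%:R `^ (- (2 / 3)))) : R)%:E <= c_nu R nu)%E.
Proof.
have [s [d [c0 [hsD hc hnuB hs2 hnum]]]] :
  exists s d c0, [/\ (s <= d.+2)%N, (c0 * 2 = d.+2 + s)%N, (nu <= s.+1 * d.+2)%N,
     (s ^ 2 < d.+2)%N & ((4 * d.+2 * d.+1) ^ 3 <= 4608 * nu ^ 2 * (d.+2 - s ^ 2) ^ 3)%N].
  by case: (leqP nu 72) => h; [apply: params_small | apply: params_big].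
have ht : k2 R * nu%:R `^ (- (2 / 3)) <=
    ((d.+2)%:R - (s%:R) ^+ 2) / (4 * (d.+2)%:R * ((d.+2)%:R - 1)).
  have := t_le R nu (d.+2 - s ^ 2) (4 * d.+2 * d.+1) hnu isT hnum.
  rewrite natrB ?(ltnW hs2) // !natrM expr2.
  have -> : ((d.+2)%:R : R) - 1 = (d.+1)%:R by rewrite -addn1 natrD addrK.
  by [].
apply: ereal_sup_ubound; exists (1 / 4 + k2 R * nu%:R `^ (- (2 / 3))) => //.
split.
  by rewrite addr_ge0 ?mulr_ge0 ?powR_ge0 // /k2 divr_ge0 // mulr_ge0 ?powR_ge0.
move=> V A w hw hac hlong.
have [l [hl hlA]] := level_exists V A nu hac hlong.
pose X (o : {ffun 'I_(s.+1) -> {set 'I_(d.+2)}}) : {set V} :=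
  [set v | (inord (l v %% d.+2) : 'I_(d.+2)) \in o (inord (l v %/ d.+2))].
apply: (avg_bound R V A w _ (lam R s.+1 d.+2 (fun b : 'I_(s.+1) => (c0 - b)%N)) X).
- exact: hw.
- by move=> o; apply: lam_ge0.
- by apply: lam_sum => b; lia.
move=> x y hxy.
have := design_levels R s d c0 hsD hc (l x) (l y) (hlA x y hxy)
  (leq_trans (hl y) hnuB).
move=> h.
under eq_bigr => o _ do rewrite /X !inE.
apply: le_trans h; rewrite lerD2l; exact: ht.
Qed.
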